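(* Let $T\subset U\subseteq S$, where $S$ is an arrangement of divisors on a variety $X$. Let $C$ be a component of $\bigcap_{D\in U}D$, let $p\in C$, and let $(U_1,U_2)$ be a splaying of $U$ at $p$. Suppose that $T\cap U_1$ and $T\cap U_2$ are both nonempty. Then $T$ is splayed at $p$ by $(T\cap U_1,T\cap U_2)$.
   Context: An arrangement of divisors on $X$ is a finite set of divisors such that the scheme-theoretic intersection of every subset is smooth. A splaying of a set $U$ of divisors at a point $p$ of their intersection is a decomposition $U=U_1\cup U_2$ with $U_1,U_2$ nonempty and $\bigcap_{D\in U_1}T_p(D)+\bigcap_{D\in U_2}T_p(D)=T_p(X)$; $U$ is then said to be splayed at $p$ by $(U_1,U_2)$. *)

(* Defs.v *)
From mathcomp Require Import all_boot all_algebra.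
Set Implicit Arguments. Unset Strict Implicit. Unset Printing Implicit Defensive.
Import GRing.Theory.
Local Open Scope ring_scope.

(* V plays the role of T_p(X) (= fullv); tp p D is the subspace T_p(D). *)
Section Splay.
Variables (k : fieldType) (V : vectType k) (I : finType) (P : Type).
Variable tp : P -> I -> {vspace V}.

Definition splayed_by (p : P) (U1 U2 : {set I}) : Prop :=
  [/\ U1 != set0, U2 != set0 &
      ((\bigcap_(D in U1) tp p D) + (\bigcap_(D in U2) tp p D) = fullv)%VS].

Definition splaying (p : P) (U U1 U2 : {set I}) : Prop :=
  U = U1 :|: U2 /\ splayed_by p U1 U2.
End Splay.

(* Main.v *)
Require Import Defs.
From mathcomp Require Import all_boot all_algebra.

Lemma capmono (k : fieldType) (V : vectType k) (I : finType) (F : I -> {vspace V})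
  (A B : {set I}) : A \subset B ->
  (\bigcap_(i in B) F i <= \bigcap_(i in A) F i)%VS.
Proof.
move=> sAB; apply/subv_bigcapP => i iA.
by apply: (@bigcapv_inf _ _ _ i) => //; apply: (subsetP sAB).
Qed.

Theorem lemma3p9 (k : fieldType) (V : vectType k) (I : finType) (P : Type)
  (onD : I -> P -> Prop) (tp : P -> I -> {vspace V})
  (S T U U1 U2 : {set I}) (p : P) :
  T \proper U -> U \subset S ->
  (forall D, D \in U -> onD D p) ->
  splaying tp p U U1 U2 ->
  T :&: U1 != set0 -> T :&: U2 != set0 ->
  splaying tp p T (T :&: U1) (T :&: U2).
Proof.
move=> /properP[sTU _] _ _ [eU [_ _ hsum]] n1 n2; split.
  by rewrite -setIUr -eU; apply/esym/setIidPl.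
split => //; apply/eqP; rewrite eqEsubv subvf /=.
rewrite -{1}hsum; apply: addvS; apply: capmono; exact: subsetIr.
Qed.
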